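(* Let $m\in(1,2]$ and $U\in C^3(\mathbb{R}^d)$ such that there exists $A_1\ge0$ with $\|D^kU(q)\|\le A_1(\|q\|+1)^{m-k}$ for all $q$ and $k=2,3$, and there exist $A_2>0$, $R\ge0$ with $D^2U(q)\{\nabla U(q)\otimes\nabla U(q)\}\ge A_2\|q\|^{3m-4}$ for all $\|q\|\ge R$. Then there exist $R_0\ge0$ and $\delta,\eta>0$ such that for all $q,x,z\in\mathbb{R}^d$ with $\|q\|\ge R_0$ and $\max(\|q-x\|,\|q-z\|)\le\delta\|q\|$, $$D^2U(q)\{\nabla U(x)\otimes\nabla U(z)\}\ge\eta\|q\|^{3m-4}.$$
   Context: $D^kU$ is the $k$-th differential with operator norm; $D^2U(q)\{a\otimes b\}=\langle a,\nabla^2U(q)b\rangle$. *)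

(* Defs.v *)
From HB Require Import structures.
From mathcomp Require Import all_boot all_order all_algebra.
From mathcomp Require Import all_classical all_reals all_analysis.
Set Implicit Arguments. Unset Strict Implicit. Unset Printing Implicit Defensive.
Import Order.TTheory GRing.Theory Num.Theory.
Import numFieldNormedType.Exports.
Local Open Scope ring_scope.

Section Defs.
Variables (R : realType) (d : nat).
Implicit Types (f : 'rV[R]_d -> R) (a b c x : 'rV[R]_d).

Definition enorm x : R := Num.sqrt (\sum_(i < d) x ord0 i ^+ 2).

Definition basis (i : 'I_d) : 'rV[R]_d := delta_mx 0 i.

Definition partial (i : 'I_d) f : 'rV[R]_d -> R := fun x => 'D_(basis i) f x.

Definition C3 f : Prop :=
  (forall x, differentiable f x) /\
  (forall i x, differentiable (partial i f) x) /\
  (forall i j x, differentiable (partial i (partial j f)) x) /\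
  (forall i j k, continuous (partial i (partial j (partial k f)))).

Definition grad f x : 'rV[R]_d := \row_i partial i f x.

Definition D2 f x a b : R :=
  \sum_(i < d) \sum_(j < d) a ord0 i * partial i (partial j f) x * b ord0 j.

Definition D3 f x a b c : R :=
  \sum_(i < d) \sum_(j < d) \sum_(k < d)
     a ord0 i * b ord0 j * c ord0 k * partial i (partial j (partial k f)) x.

End Defs.

(* Main.v *)
Require Import Defs.
From HB Require Import structures.
From mathcomp Require Import all_boot all_order all_algebra.
From mathcomp Require Import all_classical all_reals all_analysis.
From mathcomp Require Import ring lra.
Import Order.TTheory GRing.Theory Num.Theory.
Import numFieldNormedType.Exports.
Local Open Scope ring_scope.
Set Implicit Arguments. Unset Strict Implicit.

Section Norms.
Variables (R : realType) (d : nat).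
Implicit Types (a b c : 'rV[R]_d).

Definition dot a b : R := \sum_(i < d) a ord0 i * b ord0 i.

Lemma sumsq_ge0 a : 0 <= \sum_(i < d) a ord0 i ^+ 2.
Proof. by apply: sumr_ge0 => i _; rewrite sqr_ge0. Qed.

Lemma enorm_ge0 a : 0 <= enorm a.
Proof. exact: sqrtr_ge0. Qed.

Lemma enorm_sq a : enorm a ^+ 2 = dot a a.
Proof. by rewrite /enorm sqr_sqrtr ?sumsq_ge0 //; apply: eq_bigr => i _; rewrite expr2. Qed.

Lemma enorm0_coord a : enorm a = 0 -> forall i, a ord0 i = 0.
Proof.
move=> h i; have h2 : \sum_(i < d) a ord0 i ^+ 2 = 0.
  by have := erefl (enorm a ^+ 2); rewrite {2}h expr0n /enorm sqr_sqrtr ?sumsq_ge0.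
have /psumr_eq0P H := h2.
by apply/eqP; rewrite -sqrf_eq0; apply/eqP; apply: H => // j _; rewrite sqr_ge0.
Qed.

Lemma cauchy_schwarz a b : dot a b <= enorm a * enorm b.
Proof.
set A := enorm a; set B := enorm b.
have A0 := enorm_ge0 a; have B0 := enorm_ge0 b.
have [Az|Apos] := eqVneq A 0.
  rewrite /dot big1 ?Az ?mul0r // => i _; by rewrite (enorm0_coord Az) mul0r.
have [Bz|Bpos] := eqVneq B 0.
  rewrite /dot big1 ?Bz ?mulr0 // => i _; by rewrite (enorm0_coord Bz) mulr0.
have key : 0 <= \sum_(i < d) (B * a ord0 i - A * b ord0 i) ^+ 2.
  by apply: sumr_ge0 => i _; rewrite sqr_ge0.
have E : \sum_(i < d) (B * a ord0 i - A * b ord0 i) ^+ 2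
   = B^+2 * dot a a + A^+2 * dot b b - 2 * (A * B) * dot a b.
  rewrite /dot !mulr_sumr -!big_split /= -sumrB; apply: eq_bigr => i _; ring.
rewrite E -!enorm_sq -/A -/B in key.
have ABp : 0 < A * B by rewrite mulr_gt0 // lt0r ?Apos ?Bpos.
have : 2 * (A * B) * dot a b <= 2 * (A * B) * (A * B) by nra.
by rewrite ler_pM2l // mulr_gt0.
Qed.

Lemma enormD a b : enorm (a + b) <= enorm a + enorm b.
Proof.
have h0 := enorm_ge0 (a + b).
rewrite -(ler_pXn2r (isT : (0 < 2)%N)) ?nnegrE ?addr_ge0 ?enorm_ge0 //.
rewrite enorm_sq.
have -> : dot (a + b) (a + b) = dot a a + 2 * dot a b + dot b b.
  rewrite /dot mulr_sumr -!big_split /=; apply: eq_bigr => i _; rewrite !mxE; ring.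
rewrite -!enorm_sq; have := cauchy_schwarz a b; nra.
Qed.

Lemma enormZ (k : R) a : enorm (k *: a) = `|k| * enorm a.
Proof.
rewrite /enorm -sqrtr_sqr -sqrtrM ?sqr_ge0 // mulr_sumr; congr Num.sqrt.
by apply: eq_bigr => i _; rewrite !mxE exprMn.
Qed.

Lemma enormN a : enorm (- a) = enorm a.
Proof. by rewrite -scaleN1r enormZ normrN normr1 mul1r. Qed.

Lemma enormB a b : enorm (a - b) = enorm (b - a).
Proof. by rewrite -enormN opprB. Qed.

End Norms.
Section Calc.
Variables (R : realType) (d : nat).
Lemma line_is_derive (f : 'rV[R]_d -> R) (p v : 'rV[R]_d) (t : R) :
  derivable f (p + t *: v) v ->
  is_derive t 1 (fun s => f (p + s *: v)) ('D_v f (p + t *: v)).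
Proof.
have E : (fun h : R => h^-1 *: (((fun s => f (p + s *: v)) \o shift t) (h *: 1) - f (p + t *: v)))
   = (fun h : R => h^-1 *: ((f \o shift (p + t *: v)) (h *: v) - f (p + t *: v))).
  apply: funext => h /=; congr (_ *: (f _ - _)).
  by rewrite /shift [_%:A]mulr1 scalerDl addrCA addrA.
move=> hd; apply: DeriveDef; by rewrite /derivable /derive /= E.
Qed.
Lemma deriveD_sum (f : 'rV[R]_d -> R) (y v : 'rV[R]_d) :
  differentiable f y -> 'D_v f y = \sum_(i < d) v ord0 i * partial i f y.
Proof.
move=> df; rewrite deriveE //.
rewrite {1}(row_sum_delta v) linear_sum; apply: eq_bigr => i _.
by rewrite linearZ /= /partial deriveE.
Qed.

Definition dotg (U : 'rV[R]_d -> R) (w p v : 'rV[R]_d) (s : R) : R :=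
  \sum_(j < d) w ord0 j * partial j U (p + s *: v).

Lemma dotg_is_derive (U : 'rV[R]_d -> R) (w p v : 'rV[R]_d) (t : R) :
  (forall j x, differentiable (partial j U) x) ->
  is_derive t 1 (dotg U w p v) (D2 U (p + t *: v) v w).
Proof.
move=> dU.
have -> : dotg U w p v = \sum_(j < d) (w ord0 j \*: (fun s => partial j U (p + s *: v))).
  by apply: funext => s; rewrite /dotg fct_sumE.
apply: is_derive_eq.
  apply: is_derive_sum => j.
  apply: is_deriveZ.
  apply: line_is_derive; exact: diff_derivable.
rewrite /D2 exchange_big /=; apply: eq_bigr => j _.
rewrite deriveD_sum // [_ *: _]mulr_sumr; apply: eq_bigr => i _.
by rewrite mulrC.
Qed.
End Calc.
Section Calc2.
Variables (R : realType).
Lemma line_is_derive' (V : normedModType R) (f : V -> R) (p v : V) (t : R) :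
  derivable f (p + t *: v) v ->
  is_derive t 1 (fun s => f (p + s *: v)) ('D_v f (p + t *: v)).
Proof.
have E : (fun h : R => h^-1 *: (((fun s => f (p + s *: v)) \o shift t) (h *: 1) - f (p + t *: v)))
   = (fun h : R => h^-1 *: ((f \o shift (p + t *: v)) (h *: v) - f (p + t *: v))).
  apply: funext => h /=; congr (_ *: (f _ - _)).
  by rewrite /shift [_%:A]mulr1 scalerDl addrCA addrA.
move=> hd; apply: DeriveDef; by rewrite /derivable /derive /= E.
Qed.

Lemma h_is_derive (r a t : R) : 0 < 1 + t *: a ->
  is_derive t 1 (fun s => (1 + s *: a) `^ r) (a * (r * (1 + t *: a) `^ (r - 1))).
Proof.
move=> pos.
have dP : differentiable (fun x : R => x `^ r) (1 + t *: a).
  by apply/derivable1_diffP; apply: derivable_powR; rewrite in_itv /= andbT.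
apply: is_derive_eq.
  apply: (@line_is_derive' R^o (fun x : R => x `^ r) 1 a t); exact: diff_derivable.
rewrite deriveE // -[X in 'd _ _ X]mulr1 -[a * 1]/(a *: (1:R)) linearZ /=.
rewrite -deriveE //.
by have [_ ->] := is_derive1_powR r pos.
Qed.
End Calc2.
Section MV.
Variables (R : realType) (d : nat).

Lemma dotg_eq (U : 'rV[R]_d -> R) (w p v : 'rV[R]_d) :
  dotg U w p v 1 - dotg U w p v 0 = dot w (grad U (p + v) - grad U p).
Proof.
rewrite /dotg /dot -sumrB; apply: eq_bigr => j _.
by rewrite scale1r scale0r addr0 !mxE mulrBr.
Qed.

Lemma grad_diff (U : 'rV[R]_d -> R) (A1 m : R) (p v : 'rV[R]_d) :
  0 <= A1 ->
  (forall j x, differentiable (partial j U) x) ->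
  (forall q a b, `|D2 U q a b| <= A1 * (enorm q + 1) `^ (m - 2) * enorm a * enorm b) ->
  exists2 c : R, 0 <= c <= 1 &
    enorm (grad U (p + v) - grad U p) <= A1 * (enorm (p + c *: v) + 1) `^ (m-2) * enorm v.
Proof.
move=> A10 dU HD2.
set w := grad U (p + v) - grad U p.
have der (s : R) : is_derive s (1:R) (dotg U w p v) (D2 U (p + s *: v) v w).
  exact: dotg_is_derive.
have [c c01 Hc] := MVT ltr01 (fun x _ => der x)
  (derivable_within_continuous (fun x _ => @ex_derive _ _ _ _ _ _ _ (der x))).
move: c01; rewrite in_itv /= => /andP[c0 c1].
exists c; first by rewrite !ltW.
rewrite dotg_eq -/w -enorm_sq subr0 mulr1 in Hc.
have := HD2 (p + c *: v) v w.
set K := A1 * _.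
have K0 : 0 <= K by rewrite mulr_ge0 ?powR_ge0.
have w0 := enorm_ge0 w; have v0 := enorm_ge0 v.
rewrite -Hc => H.
have H' : enorm w ^+ 2 <= K * enorm v * enorm w by apply: le_trans (ler_norm _) H.
have Kv0 : 0 <= K * enorm v by rewrite mulr_ge0.
nra.
Qed.
Lemma grad_growth (U : 'rV[R]_d -> R) (A1 m : R) (q : 'rV[R]_d) :
  1 < m -> 0 <= A1 ->
  (forall j x, differentiable (partial j U) x) ->
  (forall q a b, `|D2 U q a b| <= A1 * (enorm q + 1) `^ (m - 2) * enorm a * enorm b) ->
  enorm (grad U q - grad U 0) <= A1 / (m - 1) * (1 + enorm q) `^ (m - 1).
Proof.
move=> m1 A10 dU HD2.
set w := grad U q - grad U 0.
set a := enorm q.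
have a0 : 0 <= a := enorm_ge0 q.
set K := enorm w * A1 / (m - 1).
pose h := fun s : R => (1 + s *: a) `^ (m - 1).
pose F := dotg U w 0 q - K \*: h.
have der (s : R) : 0 <= s -> is_derive s (1:R) F
    (D2 U (0 + s *: q) q w - K *: (a * ((m - 1) * (1 + s *: a) `^ (m - 1 - 1)))).
  move=> s0; apply: is_deriveB; first exact: dotg_is_derive.
  apply: is_deriveZ; apply: h_is_derive.
  by apply: (@lt_le_trans _ _ 1) => //; rewrite lerDl mulr_ge0.
have io (x : R) : x \in `]0, 1[ -> 0 <= x by rewrite in_itv /= => /andP[/ltW].
have ic (x : R) : x \in `[0, 1] -> 0 <= x by rewrite in_itv /= => /andP[].
have [c c01 Hc] := MVT ltr01 (fun x hx => der x (io x hx))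
  (derivable_within_continuous (fun x hx => @ex_derive _ _ _ _ _ _ _ (der x (ic x hx)))).
move: (io c c01) => c0.
have FE x : F x = dotg U w 0 q x - K * h x by [].
rewrite !FE subr0 mulr1 in Hc.
have Edot : dotg U w 0 q 1 - dotg U w 0 q 0 = enorm w ^+ 2.
  by rewrite dotg_eq add0r enorm_sq.
have h0 : h 0 = 1 by rewrite /h scale0r addr0 powR1.
have Hb := HD2 (0 + c *: q) q w.
rewrite add0r enormZ (ger0_norm c0) -/a in Hb.
move: Hc; rewrite add0r.
have -> : m - 1 - 1 = m - 2 by ring.
have -> : 1 + c *: a = c * a + 1 by rewrite addrC.
set P := (c * a + 1) `^ (m - 2).
have m10 : m - 1 != 0 by rewrite subr_eq0 gt_eqF.
have EK : K *: (a * ((m - 1) * P)) = A1 * P * a * enorm w.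
  rewrite /K /GRing.scale /=; field; exact: m10.
rewrite EK => Hc.
have Hd := le_trans (ler_norm _) Hb.
have H1 : enorm w ^+ 2 - K * (h 1 - 1) <= 0.
  have -> : enorm w ^+ 2 - K * (h 1 - 1) = dotg U w 0 q 1 - K * h 1 - (dotg U w 0 q 0 - K * h 0).
    by rewrite -Edot h0; ring.
  by rewrite Hc subr_le0.
have K0 : 0 <= K.
  by apply: divr_ge0; [exact: mulr_ge0 (enorm_ge0 w) A10 | rewrite subr_ge0 ltW].
have w0 := enorm_ge0 w.
have X0 : 0 <= A1 / (m - 1) * h 1.
  by apply: mulr_ge0; [apply: divr_ge0 => //; rewrite subr_ge0 ltW | exact: powR_ge0].
have EK2 : K * h 1 = enorm w * (A1 / (m - 1) * h 1) by rewrite /K; ring.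
have h1e : h 1 = (1 + a) `^ (m - 1) by rewrite /h scale1r.
rewrite -h1e.
nra.
Qed.
End MV.
Set Implicit Arguments. Unset Strict Implicit.
Section P.
Variable R : realType.
Lemma powR_anti (x y r : R) : 0 < x -> x <= y -> r <= 0 -> y `^ r <= x `^ r.
Proof.
move=> x0 xy r0.
have y0 : 0 < y by apply: lt_le_trans xy.
have [t rt] : exists t, r = - t by exists (- r); rewrite opprK.
rewrite rt in r0 *; move: r0; rewrite oppr_le0 => t0.
rewrite !powRN lef_pV2 ?posrE ?powR_gt0 //.
by apply: (ge0_ler_powR t0) => //; rewrite ?nnegrE ltW.
Qed.

Lemma D2_decomp d (U : 'rV[R]_d -> R) q a b c :
  D2 U q a b = D2 U q c c + D2 U q (a - c) b + D2 U q c (b - c).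
Proof.
rewrite /D2 -!big_split /=; apply: eq_bigr => i _.
rewrite -!big_split /=; apply: eq_bigr => j _; rewrite !mxE; ring.
Qed.
Lemma mul4_le (a b c e a' b' c' e' : R) : 0 <= a -> 0 <= b -> 0 <= c -> 0 <= e ->
  a <= a' -> b <= b' -> c <= c' -> e <= e' -> a * b * c * e <= a' * b' * c' * e'.
Proof.
move=> a0 b0 c0 e0 aa bb cc ee.
apply: ler_pM => //; first by rewrite !mulr_ge0.
apply: ler_pM => //; first by rewrite !mulr_ge0.
exact: ler_pM.
Qed.
End P.

Unset Implicit Arguments.
Theorem lemma14 (R : realType) (d : nat) (m : R) (U : 'rV[R]_d -> R) :
  1 < m <= 2 ->
  C3 U ->
  (exists A1 : R, 0 <= A1 /\
     (forall q a b : 'rV[R]_d,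
        `|D2 U q a b| <= A1 * (enorm q + 1) `^ (m - 2) * enorm a * enorm b) /\
     (forall q a b c : 'rV[R]_d,
        `|D3 U q a b c| <=
          A1 * (enorm q + 1) `^ (m - 3) * enorm a * enorm b * enorm c)) ->
  (exists A2 Rr : R, 0 < A2 /\ 0 <= Rr /\
     forall q : 'rV[R]_d, Rr <= enorm q ->
       D2 U q (grad U q) (grad U q) >= A2 * enorm q `^ (3 * m - 4)) ->
  exists R0 delta eta : R, 0 <= R0 /\ 0 < delta /\ 0 < eta /\
    forall q x z : 'rV[R]_d, R0 <= enorm q ->
      Num.max (enorm (q - x)) (enorm (q - z)) <= delta * enorm q ->
      D2 U q (grad U x) (grad U z) >= eta * enorm q `^ (3 * m - 4).
Proof.
move=> /andP[m1 m2] [_ [dU _]] [A1 [A10 [HD2 _]]] [A2 [Rr [A2p [Rr0 HA]]]].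
set g0 := enorm (grad U 0).
set C := g0 + 2 * A1 / (m - 1).
set X := A1 ^+ 2 * (2 * C + A1).
have m10 : 0 < m - 1 by rewrite subr_gt0.
have g00 : 0 <= g0 := enorm_ge0 _.
have C0 : 0 <= C.
  apply: addr_ge0 => //; apply: divr_ge0; [apply: mulr_ge0 | apply: ltW] => //.
have X0 : 0 <= X.
  apply: mulr_ge0; first exact: sqr_ge0.
  by apply: addr_ge0 => //; apply: mulr_ge0.
set del := Num.min (1/2) (A2 / (4 * (X + 1))).
have delp : 0 < del.
  rewrite lt_min; apply/andP; split; first by rewrite divr_gt0.
  apply: divr_gt0 => //; apply: mulr_gt0 => //; exact: ltr_wpDl X0 ltr01.
have del2 : del <= 1/2 by rewrite ge_min lexx.
have delX : del <= A2 / (4 * (X + 1)) by rewrite ge_min lexx orbT.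
exists (Num.max Rr 1), del, (A2 / 2).
split; first by rewrite le_max Rr0.
split; first exact: delp.
split; first by rewrite divr_gt0.
move=> q x z; rewrite ge_max => /andP[Rrq q1].
set s := enorm q.
rewrite ge_max => /andP[hx hz].
have s1 : 1 <= s by [].
have s0 : 0 < s by apply: lt_le_trans s1.
set P1 := s `^ (m - 1).
set P2 := s `^ (m - 2).
have P11 : 1 <= P1.
  by have := @ler_powR R s s1 0 (m - 1); rewrite powRr0; apply; rewrite subr_ge0 ltW.
have P20 : 0 <= P2 by exact: powR_ge0.
have snz : s != 0 by rewrite gt_eqF.
have EP : P2 * P1 * P1 = s `^ (3 * m - 4).
  rewrite (_ : 3 * m - 4 = (m - 2) + (m - 1) + (m - 1)); last by ring.
  by rewrite powRD ?snz ?implybT // powRD ?snz ?implybT.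
have P2s : P2 * s = P1.
  rewrite /P1 (_ : m - 1 = (m - 2) + 1); last by ring.
  by rewrite powRD ?snz ?implybT // powRr1 // ltW.
have A1m0 : 0 <= A1 / (m - 1) by apply: divr_ge0 => //; exact: ltW.
have Hgq : enorm (grad U q) <= C * P1.
  have G := @grad_growth R d U A1 m q m1 A10 dU HD2.
  have T := enormD (grad U q - grad U 0) (grad U 0); rewrite subrK in T.
  have Y1 : (1 + s) `^ (m - 1) <= (2 * s) `^ (m - 1).
    have s0' := ltW s0.
    apply: (ge0_ler_powR (ltW m10)); rewrite ?nnegrE ?addr_ge0 ?mulr_ge0 //.
    lra.
  have Y2 : (2 * s) `^ (m - 1) <= 2 * P1.
    rewrite powRM ?(ltW s0) //; apply: ler_wpM2r; first exact: powR_ge0.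
    have := @ler_powR R 2 (ler1n _ 2) (m - 1) 1; rewrite powRr1 //; apply.
    by rewrite lerBlDr -(natrD R 1 1).
  have -> : C * P1 = g0 * P1 + A1 / (m - 1) * (2 * P1) by rewrite /C; ring.
  apply: (le_trans T); rewrite addrC; apply: lerD.
    by rewrite ler_peMr.
  exact: (le_trans G (ler_wpM2l A1m0 (le_trans Y1 Y2))).
set E := 2 * A1 * del.
have Hdiff y : enorm (q - y) <= del * s -> enorm (grad U y - grad U q) <= E * P1.
  move=> hy.
  have [c /andP[c0 c1] Hc] := @grad_diff R d U A1 m q (y - q) A10 dU HD2.
  have qy : q + (y - q) = y by rewrite addrC subrK.
  rewrite qy in Hc.
  set b := enorm (q + c *: (y - q)) + 1 in Hc.
  have vq : enorm (y - q) <= del * s by rewrite enormB.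
  have v0 := enorm_ge0 (y - q).
  have hb : s / 2 <= b.
    have T := enormD (q + c *: (y - q)) (- (c *: (y - q))).
    rewrite addrK enormN enormZ ger0_norm // in T.
    have cv : c * enorm (y - q) <= enorm (y - q) by rewrite ler_piMl.
    rewrite -/s in T.
    have ds := ler_wpM2r (ltW s0) del2.
    rewrite /b; have := enorm_ge0 (q + c *: (y - q)); lra.
  have s20 : 0 < s / 2 by rewrite divr_gt0.
  have hb2 : b `^ (m - 2) <= (s / 2) `^ (m - 2).
    by apply: powR_anti => //; rewrite subr_le0.
  have h2 : (s / 2) `^ (m - 2) <= P2 * 2.
    rewrite powRM; [apply: ler_wpM2l; first exact: P20 | exact: ltW s0 | by rewrite invr_ge0].
    have i2 : 0 < (2:R)^-1 <= 1 by apply/andP; split; lra.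
    have := @ger_powR R (2^-1) i2 (-1) (m - 2).
    rewrite powR_inv1 ?invrK ?invr_ge0 //; apply; lra.
  apply: (le_trans Hc).
  have -> : E * P1 = A1 * (P2 * 2) * (del * s) by rewrite -P2s /E; ring.
  apply: ler_pM => //; first by apply: mulr_ge0 => //; exact: powR_ge0.
  apply: ler_wpM2l => //; exact: le_trans hb2 h2.
have E0 : 0 <= E by rewrite /E !mulr_ge0 // ltW.
have Ex := Hdiff x hx.
have Ez := Hdiff z hz.
have Hgz : enorm (grad U z) <= (C + E) * P1.
  have T := enormD (grad U z - grad U q) (grad U q); rewrite subrK in T.
  rewrite mulrDl addrC; apply: (le_trans T); exact: lerD.
have Q2 : (s + 1) `^ (m - 2) <= P2.
  by apply: powR_anti => //; [rewrite lerDl | rewrite subr_le0].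
have Q0 : 0 <= (s + 1) `^ (m - 2) by exact: powR_ge0.
have e1 : `|D2 U q (grad U x - grad U q) (grad U z)| <= A1 * E * (C + E) * (P2 * P1 * P1).
  apply: (le_trans (HD2 _ _ _)); rewrite -/s.
  have -> : A1 * E * (C + E) * (P2 * P1 * P1) = A1 * P2 * (E * P1) * ((C + E) * P1) by ring.
  by apply: mul4_le => //; exact: enorm_ge0.
have e2 : `|D2 U q (grad U q) (grad U z - grad U q)| <= A1 * E * C * (P2 * P1 * P1).
  apply: (le_trans (HD2 _ _ _)); rewrite -/s.
  have -> : A1 * E * C * (P2 * P1 * P1) = A1 * P2 * (C * P1) * (E * P1) by ring.
  by apply: mul4_le => //; exact: enorm_ge0.
have EA : E <= A1.
  have := ler_wpM2l A10 del2; rewrite /E; lra.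
have dX : del * (4 * (X + 1)) <= A2.
  by rewrite -ler_pdivlMr // mulr_gt0 // ltr_wpDl.
have coef : A1 * E * (C + E) + A1 * E * C <= A2 / 2.
  have h1 : A1 * E * (C + E) + A1 * E * C <= A1 * E * (2 * C + A1).
    have -> : A1 * E * (C + E) + A1 * E * C = A1 * E * (2 * C + E) by ring.
    by apply: ler_wpM2l; [rewrite mulr_ge0 | rewrite lerD2l].
  apply: (le_trans h1).
  have -> : A1 * E * (2 * C + A1) = 2 * del * X by rewrite /E /X; ring.
  have XX : X <= X + 1 by rewrite lerDl.
  have := ler_wpM2l (ltW delp) XX.
  lra.
rewrite (D2_decomp U q (grad U x) (grad U z) (grad U q)).
have main := HA q Rrq.
rewrite -EP in main *.
set PP := P2 * P1 * P1 in main e1 e2 *.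
have PP0 : 0 <= PP by rewrite /PP !mulr_ge0 // ?(le_trans ler01 P11).
have := ler_wpM2r PP0 coef; rewrite mulrDl.
move: e1 e2; rewrite !ler_norml => /andP[a1 _] /andP[a2 _].
lra.
Qed.
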